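(* Let $\Sigma$ be an alphabet and $L\ge n\ge 1$. Let $h_1:\Sigma\to\mathrm{GF}(2)[x]/(x^L+1)$ be a random function whose values $h_1(c)$, $c\in\Sigma$, are mutually independent and uniformly distributed, and let $h(a_1,\dots,a_n)=\sum_{i=1}^n h_1(a_i)x^{n-i}$ computed in $\mathrm{GF}(2)[x]/(x^L+1)$. Fix a set $S$ of $n-1$ bit positions consecutive modulo $L$, and let $\tilde h(a)$ denote the $(L-n+1)$-bit value obtained from $h(a)$ by deleting the bits at positions in $S$. Then $\tilde h$ is pairwise independent: for all distinct $a,a'\in\Sigma^n$ and all $(L-n+1)$-bit values $y,y'$, $P(\tilde h(a)=y\wedge\tilde h(a')=y')=2^{-2(L-n+1)}$.
   Context: This is the Cyclic hash family. Elements of $\mathrm{GF}(2)[x]/(x^L+1)$ are identified with polynomials $\sum_{i=0}^{L-1}c_ix^i$ over $\mathrm{GF}(2)$ (equivalently $L$-bit integers with bit $i$ equal to $c_i$). A set of $m$ positions is consecutive modulo $L$ if it equals $\{k\bmod L,\dots,(k+m-1)\bmod L\}$ for some integer $k$. *)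

(* Defs.v *)
From HB Require Import structures.
From mathcomp Require Import all_boot all_order all_algebra.
Set Implicit Arguments. Unset Strict Implicit. Unset Printing Implicit Defensive.
Import GRing.Theory.
Local Open Scope ring_scope.


(* An element of GF(2)[x]/(x^L+1) is stored as its L-bit coefficient vector
   (bit i = coefficient of x^i). *)
Definition cyc (L : nat) := {ffun 'I_L -> 'F_2}.

Definition poly_of_cyc L (v : cyc L) : {poly 'F_2} :=
  \sum_(i < L) v i *: 'X^i.

Definition cyc_of_poly L (p : {poly 'F_2}) : cyc L :=
  [ffun i : 'I_L => (p %% ('X^L + 1))`_i].

(* h(a_1..a_n) = sum_{i=1}^n h1(a_i) x^(n-i) in GF(2)[x]/(x^L+1);
   with 0-based index i, a_{i+1} = tnth a i gets exponent n-1-i. *)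
Definition cyclic_hash (Sigma : finType) L n (h1 : {ffun Sigma -> cyc L})
  (a : n.-tuple Sigma) : cyc L :=
  cyc_of_poly L (\sum_(i < n) poly_of_cyc (h1 (tnth a i)) * 'X^(n.-1 - i)).

Definition consecutive_mod L (S : {set 'I_L}) (m : nat) : Prop :=
  exists k : nat, S = [set i : 'I_L | [exists j : 'I_m, val i == (k + j) %% L]%N].

Definition kept_positions L (S : {set 'I_L}) : seq nat :=
  [seq val i | i <- enum 'I_L & i \notin S].

Definition delete_bits L n (S : {set 'I_L}) (v : cyc L) : {ffun 'I_(L - n + 1)%N -> 'F_2} :=
  [ffun j : 'I_(L - n + 1)%N =>
     let p := nth 0%N (kept_positions S) j in
     (if insub p is Some q then v q else 0%R) : 'F_2].

Definition uprob (T : finType) (E : pred T) : rat :=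
  (#|[set x | E x]|%:R / #|T|%:R)%R.

(* Main.v *)
From HB Require Import structures.
From mathcomp Require Import all_boot all_order all_algebra.
From Stdlib Require Import Lia.
Require Import Defs.
Set Implicit Arguments. Unset Strict Implicit. Unset Printing Implicit Defensive.
Import GRing.Theory Num.Theory.
Local Open Scope ring_scope.

Lemma F2_cases (d : 'F_2) : d = 0 \/ d = 1.
Proof. case: d => [[|[|]]] //= ?; [left|right]; by apply/val_inj. Qed.

Lemma fiber_card (T B : finZmodType) (f : T -> B)
  (fD : forall x y, f (x + y) = f x + f y) (fsurj : forall z, exists x, f x = z) (z : B) :
  (#|[set x | f x == z]| * #|B| = #|T|)%N.
Proof.
have f0 : f 0 = 0.
  by apply: (addrI (f 0)); rewrite -fD !addr0.
have Hfib : forall w, #|[set x | f x == w]| = #|[set x | f x == 0]|.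
  move=> w; have [x0 <-] := fsurj w.
  rewrite -(card_preimset _ (addIr x0)); apply: eq_card => x.
  by rewrite !inE fD -{2}(add0r (f x0)) (inj_eq (addIr _)).
rewrite Hfib -[RHS]sum1_card (partition_big f xpredT) //=.
rewrite (eq_bigr (fun _ => #|[set x | f x == 0]|)); last first.
  by move=> w _; rewrite -(Hfib w) -sum1_card; apply: eq_bigl => x; rewrite inE.
by rewrite sum_nat_const mulnC cardE.
Qed.

Lemma dual_surj (T : finZmodType) M (f : T -> 'rV['F_2]_M)
  (fD : forall x y, f (x + y) = f x + f y)
  (H : forall u : 'rV_M, (forall x, f x *m u^T = 0) -> u = 0) (z : 'rV_M) :
  exists x, f x = z.
Proof.
have f0 : f 0 = 0.
  by apply: (addrI (f 0)); rewrite -fD !addr0.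
pose A := \matrix_(i < #|T|) f (enum_val i).
have fA : forall x, f x = row (enum_rank x) A by move=> x; rewrite rowK enum_rankK.
have kerT : kermx A^T = 0.
  apply/row_matrixP => i; rewrite row0; apply: H => x.
  have : row i (kermx A^T) *m A^T = 0 by rewrite -row_mul mulmx_ker row0.
  move/(congr1 trmx); rewrite trmx_mul trmxK trmx0 => HA.
  by rewrite fA -row_mul HA row0.
have full : row_full A.
  by move: kerT => /eqP; rewrite kermx_eq0 /row_free mxrank_tr.
have /submxP [D ->] := submx_full z full.
rewrite mulmx_sum_row.
exists (\sum_i (if D 0 i == 1 then enum_val i else 0)).
rewrite (big_morph f fD f0); apply: eq_bigr => i _.
by case: (F2_cases (D 0 i)) => ->; rewrite ?scale0r ?scale1r /= ?f0 // rowK.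
Qed.
Lemma Xmod (L : nat) (hL : (0 < L)%N) (e q : nat) (hq : (q < L)%N) :
  (('X^e : {poly 'F_2}) %% ('X^L + 1))`_q = ((e %% L)%N == q)%:R.
Proof.
have m1 : (1 : {poly 'F_2}) = -1.
  by rewrite -polyCN; congr (_%:P); apply/val_inj.
have -> : ('X^e : {poly 'F_2}) =
    ('X^(e %% L) * \sum_(i < e %/ L) ('X^L) ^+ i) * ('X^L + 1) + 'X^(e %% L).
  rewrite -mulrA mulrC (mulrC _ ('X^L + 1)) {1}m1 -subrX1 mulrBl mul1r subrK.
  by rewrite -exprM -exprD mulnC -divn_eq.
rewrite modp_addl_mul_small; first by rewrite coefXn eq_sym.
rewrite size_polyXn size_addl ?size_polyXn ?size_polyC //=.
  by rewrite ltnS ltn_pmod.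

Qed.
Ltac mylia := (try apply/leP);
  (repeat match goal with H : is_true (_ <= _)%N |- _ => move/leP: H => H end);
  (repeat match goal with H : context [subn] |- _ => rewrite -minusE in H end);
  (repeat match goal with H : context [addn] |- _ => rewrite -plusE in H end);
  (repeat match goal with H : context [muln] |- _ => rewrite -multE in H end);
  rewrite -?minusE -?plusE -?multE; lia.

Definition mu (Lam : nat -> 'F_2) (L k n1 s : nat) : 'F_2 := Lam ((k + n1 + s) %% L)%N.

Lemma term (Lam : nat -> 'F_2) (L n1 k e r : nat) (hL : (n1 < L)%N) (hr : (r <= n1)%N)
  (h0 : forall j, (j < n1)%N -> Lam ((k + j) %% L)%N = 0) :
  (if (e < r)%N then 0 else (\poly_(s < L - n1) mu Lam L k n1 s)`_(e - r)%N)
  = if (e < L)%N then Lam (((k + e) %% L + (n1 - r)) %% L)%N else 0.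
Proof.
rewrite coef_poly; case: (ltnP e r) => her.
  have -> : (e < L)%N by mylia.
  rewrite modnDml -addnA h0 //; mylia.
case: (ltnP (e - r) (L - n1)) => hs.
  have -> : (e < L)%N by mylia.
  rewrite /mu modnDml; congr (Lam (_ %% _)%N); mylia.
case: (ltnP e L) => heL //.
rewrite modnDml.
have -> : (k + e + (n1 - r) = (k + (e - r - (L - n1))) + L)%N by mylia.
rewrite modnDr h0 //; mylia.
Qed.

Definition Qp (Sigma : finType) n (a : n.-tuple Sigma) (c : Sigma) : {poly 'F_2} :=
  \sum_(r < n) (tnth a r == c)%:R *: 'X^r.

Lemma coefQ (Sigma : finType) n (a : n.-tuple Sigma) c (l : {poly 'F_2}) e :
  (l * Qp a c)`_e = \sum_(r < n) (tnth a r == c)%:R * (if (e < r)%N then 0 else l`_(e - r)).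
Proof.
rewrite /Qp mulr_sumr coef_sum; apply: eq_bigr => r _.
by rewrite -scalerAr coefZ coefMXn.
Qed.

Lemma coefQr (Sigma : finType) n (b : n.-tuple Sigma) c (r : 'I_n) :
  (Qp b c)`_r = (tnth b r == c)%:R.
Proof.
rewrite /Qp coef_sum (bigD1 r) //= big1 ?addr0.
  by rewrite coefZ coefXn eqxx mulr1.
move=> i hi; rewrite coefZ coefXn (_ : (nat_of_ord r == i) = false) ?mulr0 //.
by apply/eqP => /val_inj hir; rewrite hir eqxx in hi.
Qed.

Lemma sum_ind (Sigma : finType) (x : Sigma) : \sum_(c : Sigma) ((x == c)%:R : 'F_2) = 1.
Proof.
rewrite (bigD1 x) //= eqxx big1 ?addr0 // => c hc.
by rewrite eq_sym (negbTE hc).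
Qed.

Lemma core (Sigma : finType) (L n1 k : nat) (hL : (n1 < L)%N)
  (a a' : n1.+1.-tuple Sigma) (haa' : a != a') (Lam Lam' : nat -> 'F_2)
  (h0 : forall j, (j < n1)%N -> Lam ((k + j) %% L)%N = 0)
  (h0' : forall j, (j < n1)%N -> Lam' ((k + j) %% L)%N = 0)
  (hK : forall c i, (i < L)%N ->
     \sum_(r < n1.+1) (tnth a r == c)%:R * Lam ((i + (n1 - r)) %% L)%N
   + \sum_(r < n1.+1) (tnth a' r == c)%:R * Lam' ((i + (n1 - r)) %% L)%N = 0) :
  forall q, (q < L)%N -> Lam q = 0.
Proof.
pose l := \poly_(s < L - n1) mu Lam L k n1 s.
pose l' := \poly_(s < L - n1) mu Lam' L k n1 s.
have step1 : forall c, l * Qp a c + l' * Qp a' c = 0.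
  move=> c; apply/polyP => e; rewrite coefD !coefQ coef0.
  have tr : forall (La : nat -> 'F_2), (forall j, (j < n1)%N -> La ((k + j) %% L)%N = 0) ->
      forall r : 'I_n1.+1,
      (if (e < r)%N then 0 else (\poly_(s < L - n1) mu La L k n1 s)`_(e - r)%N)
      = if (e < L)%N then La (((k + e) %% L + (n1 - r)) %% L)%N else 0.
    by move=> La hLa r; apply: term => //; rewrite -ltnS.
  rewrite (eq_bigr _ (fun r _ => congr1 (fun t => _ * t) (tr _ h0 r))).
  rewrite (eq_bigr _ (fun r _ => congr1 (fun t => _ * t) (tr _ h0' r))).
  case: (ltnP e L) => heL; first by apply: hK; rewrite ltn_pmod //; case: (L) hL.
  by rewrite !big1 ?addr0 // => r _; rewrite mulr0.
have QJ : forall (b : n1.+1.-tuple Sigma), \sum_c Qp b c = \sum_(r < n1.+1) 'X^r.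
  move=> b; rewrite /Qp exchange_big; apply: eq_bigr => r _.
  by rewrite -scaler_suml sum_ind scale1r.
have J0 : \sum_(r < n1.+1) ('X^r : {poly 'F_2}) != 0.
  apply/eqP => /(congr1 (fun p : {poly 'F_2} => p`_0)).
  rewrite coef_sum big_ord_recl /= coefXn eqxx big1 ?addr0 ?coef0; first by move/eqP; rewrite oner_eq0.
  by move=> i _; rewrite coefXn.
have hl' : l' = -l.
  have : (l + l') * \sum_(r<n1.+1) 'X^r = 0.
    rewrite mulrDl -{1}(QJ a) -(QJ a') !mulr_sumr -big_split big1 //= => c _; exact: step1.
  move/eqP; rewrite mulf_eq0 (negbTE J0) orbF addr_eq0 => /eqP ->.
  by rewrite opprK.
have hl : l = 0.
  apply/eqP; apply/negP => /negP hl.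
  move/negP: haa'; apply; apply/eqP.
  apply: eq_from_tnth => r.
  have : l * (Qp a (tnth a r) - Qp a' (tnth a r)) = 0.
    by rewrite mulrBr -mulNr -hl' step1.
  move/eqP; rewrite mulf_eq0 (negbTE hl) /= subr_eq0 => /eqP /(congr1 (fun p : {poly 'F_2} => p`_r)).
  rewrite !coefQr eqxx; case: eqP => // _ /eqP.
have L0 : (0 < L)%N by case: (L) hL.
have hmu : forall s, (s < L)%N -> Lam ((k + n1 + s) %% L)%N = 0.
  move=> s hs; case: (ltnP s (L - n1)) => hs1.
    by move/(congr1 (fun p : {poly 'F_2} => p`_s)): hl; rewrite coef_poly hs1 coef0.
  have -> : (k + n1 + s = (k + (s - (L - n1))) + L)%N by mylia.
  by rewrite modnDr h0 //; mylia.
move=> q hq.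
set K := (k + n1)%N.
have hK' : (K %% L <= L)%N by rewrite ltnW // ltn_pmod.
have -> : q = ((K + (q + (L - K %% L)) %% L) %% L)%N.
  rewrite modnDmr {1}(divn_eq K L).
  have -> : (K %/ L * L + K %% L + (q + (L - K %% L)) = K %/ L * L + q + L)%N by mylia.
  by rewrite modnDr modnMDl modn_small.
by rewrite hmu // ltn_pmod.
Qed.

HB.instance Definition _ (aT : finType) (rT : finZmodType) := GRing.Zmodule.on {ffun aT -> rT}.

Lemma pocD L (v w : cyc L) : poly_of_cyc (v + w) = poly_of_cyc v + poly_of_cyc w.
Proof. by rewrite /poly_of_cyc -big_split; apply: eq_bigr => i _; rewrite ffunE scalerDl. Qed.

Lemma poc0 L : poly_of_cyc (0 : cyc L) = 0.
Proof. by rewrite /poly_of_cyc big1 // => i _; rewrite ffunE scale0r. Qed.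

Lemma pocE L (i : 'I_L) : poly_of_cyc [ffun q : 'I_L => ((q == i)%:R : 'F_2)] = 'X^i.
Proof.
rewrite /poly_of_cyc (bigD1 i) //= big1 ?addr0; first by rewrite ffunE eqxx scale1r.
by move=> j hj; rewrite ffunE (negbTE hj) scale0r.
Qed.

Lemma copD L (p q : {poly 'F_2}) : cyc_of_poly L (p + q) = cyc_of_poly L p + cyc_of_poly L q.
Proof. by apply/ffunP => i; rewrite !ffunE modpD coefD. Qed.

Lemma hashD (Sigma : finType) L n (h1 h2 : {ffun Sigma -> cyc L}) (a : n.-tuple Sigma) :
  cyclic_hash (h1 + h2) a = cyclic_hash h1 a + cyclic_hash h2 a.
Proof.
rewrite /cyclic_hash -copD -big_split; congr cyc_of_poly; apply: eq_bigr => i _.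
by rewrite ffunE pocD mulrDl.
Qed.

Lemma dbD L n (S : {set 'I_L}) (v w : cyc L) :
  delete_bits n S (v + w) = delete_bits n S v + delete_bits n S w.
Proof.
apply/ffunP => j; rewrite !ffunE /=; case: insub => [q|]; first by rewrite ffunE.
by rewrite addr0.
Qed.

Lemma dot_row m (g : 'I_m -> 'F_2) (v : 'rV['F_2]_m) :
  ((\row_j g j) *m v^T) 0 0 = \sum_j g j * v 0 j.
Proof. by rewrite !mxE; apply: eq_bigr => j _; rewrite !mxE. Qed.

Lemma count_enum (T : finType) (P : pred T) : count P (enum T) = #|P|.
Proof.
rewrite cardE /enum_mem size_filter count_filter; apply: eq_count => y.
by rewrite /= andbT.
Qed.

Theorem mainTheorem8 (Sigma : finType) (L n : nat) (hn : (1 <= n)%N) (hnL : (n <= L)%N)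
  (S : {set 'I_L}) (hS : consecutive_mod S n.-1)
  (a a' : n.-tuple Sigma) (haa' : a != a')
  (y y' : {ffun 'I_(L - n + 1)%N -> 'F_2}) :
  uprob (fun h1 : {ffun Sigma -> cyc L} =>
           (delete_bits n S (cyclic_hash h1 a) == y) &&
           (delete_bits n S (cyclic_hash h1 a') == y'))
  = ((2%:R : rat) ^+ (2 * (L - n + 1))%N)^-1.
Proof.
move: hn hnL S hS a a' haa' y y'; case: n => [//|n1] _ hnL S [k hSk] a a' haa' y y'.
have hL : (n1 < L)%N by [].
have L0 : (0 < L)%N by case: (L) hL.
set m := (L - n1.+1 + 1)%N.
have hm : m = (L - n1)%N by rewrite /m; mylia.
set kept := kept_positions S.
have hSin : forall j0, (j0 < n1)%N -> forall q : 'I_L, val q = ((k + j0) %% L)%N -> q \in S.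
  move=> j0 hj0 q hq; rewrite hSk inE; apply/existsP; exists (Ordinal hj0).
  by rewrite /= hq.
have cardS : #|S| = n1.
  pose g := fun j : 'I_n1 => Ordinal (ltn_pmod (k + j) L0).
  have -> : S = [set g j | j : 'I_n1].
    apply/setP => q; rewrite hSk inE; apply/existsP/imsetP => [[j /eqP hj]|[j _ ->]].
      by exists j => //; apply: val_inj.
    by exists j.
  rewrite card_imset ?card_ord // => j1 j2 /(congr1 val) /= /eqP.
  rewrite eqn_modDl !modn_small => [/eqP hj||]; first by apply: val_inj.
    by apply: ltn_trans hL.
  by apply: ltn_trans hL.
have sizeK : size kept = m.
  rewrite /kept /kept_positions size_map size_filter count_enum hm.
  have -> : #|[pred i : 'I_L | i \notin S]| = #|~: S|.
    by apply: eq_card => i; rewrite !inE.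
  by rewrite (cardsCs (~: S)) setCK cardS card_ord.
have uniqK : uniq kept.
  rewrite /kept /kept_positions map_inj_uniq ?filter_uniq //; [exact: index_enum_uniq| exact: val_inj].
have hp : forall j : 'I_m, exists2 q : 'I_L, val q = nth 0%N kept j & q \notin S.
  move=> j; have : nth 0%N kept j \in kept by rewrite mem_nth // sizeK.
  rewrite /kept /kept_positions; case/mapP => q; rewrite mem_filter => /andP [hq _] ->.
  by exists q.
have db : forall (w : cyc L) (j : 'I_m) (q : 'I_L), val q = nth 0%N kept j ->
    delete_bits n1.+1 S w j = w q.
  move=> w j q hq; rewrite /delete_bits ffunE /=.
  case: insubP => [q' _ hq'|]; first by congr (w _); apply: val_inj; rewrite hq'.
  by rewrite -hq ltn_ord.
pose f := fun h1 : {ffun Sigma -> cyc L} =>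
  row_mx (\row_j delete_bits n1.+1 S (cyclic_hash h1 a) j)
         (\row_j delete_bits n1.+1 S (cyclic_hash h1 a') j).
have fD : forall x1 x2, f (x1 + x2) = f x1 + f x2.
  move=> x1 x2; rewrite /f add_row_mx !hashD !dbD; congr row_mx; apply/rowP => j;
  by rewrite !mxE ffunE.
pose z := row_mx (\row_j y j) (\row_j y' j).
have hev : forall h1 : {ffun Sigma -> cyc L},
    ((delete_bits n1.+1 S (cyclic_hash h1 a) == y) &&
     (delete_bits n1.+1 S (cyclic_hash h1 a') == y')) = (f h1 == z).
  move=> h1; apply/andP/eqP => [[/eqP e1 /eqP e2]| /eq_row_mx [e1 e2]].
    by rewrite /f e1 e2.
  split; apply/eqP/ffunP => j.
    by move/rowP: e1 => /(_ j); rewrite !mxE.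
  by move/rowP: e2 => /(_ j); rewrite !mxE.
have fsurj : forall w, exists x, f x = w.
  apply: dual_surj => // u Hu.
  pose l := lsubmx u; pose l' := rsubmx u.
  have Hu' : forall x,
      \sum_j delete_bits n1.+1 S (cyclic_hash x a) j * l 0 j
    + \sum_j delete_bits n1.+1 S (cyclic_hash x a') j * l' 0 j = 0.
    move=> x; have := Hu x; rewrite -[u]hsubmxK tr_row_mx mul_row_col => /matrixP /(_ 0 0).
    by rewrite [LHS]mxE !dot_row [RHS]mxE.
  pose Lam (v : 'rV['F_2]_m) (t : nat) := \sum_(j < m) ((t == nth 0%N kept j)%:R * v 0 j).
  pose delta (c : Sigma) (i : 'I_L) : {ffun Sigma -> cyc L} :=
    [ffun d => if d == c then [ffun q : 'I_L => ((q == i)%:R : 'F_2)] else 0].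
  have dot_test : forall (b : n1.+1.-tuple Sigma) c (i : 'I_L) (v : 'rV_m),
      \sum_j delete_bits n1.+1 S (cyclic_hash (delta c i) b) j * v 0 j
    = \sum_(r < n1.+1) (tnth b r == c)%:R * Lam v ((i + (n1 - r)) %% L)%N.
    move=> b c i v.
    have hh : cyclic_hash (delta c i) b =
        cyc_of_poly L (\sum_(r < n1.+1) (tnth b r == c)%:R *: 'X^(i + (n1 - r))).
      rewrite /cyclic_hash; congr cyc_of_poly; apply: eq_bigr => r _; rewrite ffunE /=.
      by case: eqP => _; [rewrite pocE -exprD scale1r | rewrite poc0 mul0r scale0r].
    have bit : forall q : 'I_L, cyclic_hash (delta c i) b q =
        \sum_(r < n1.+1) (tnth b r == c)%:R * ((((i + (n1 - r)) %% L)%N == q)%:R).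
      move=> q; rewrite hh ffunE.
      rewrite (big_morph (fun p => p %% ('X^L + 1)) (fun p q => modpD _ p q) (mod0p _)) coef_sum.
      by apply: eq_bigr => r _; rewrite modpZl coefZ Xmod.
    rewrite /Lam.
    transitivity (\sum_(j < m) (\sum_(r < n1.+1) (tnth b r == c)%:R *
        ((((i + (n1 - r)) %% L)%N == nth 0%N kept j)%:R)) * v 0 j).
      apply: eq_bigr => j _; case: (hp j) => q hq _.
      by rewrite (db _ j q hq) bit hq.
    under eq_bigr do rewrite mulr_suml.
    rewrite exchange_big; apply: eq_bigr => r _; rewrite mulr_sumr.
    by apply: eq_bigr => j _; rewrite mulrA.
  have h0 : forall v : 'rV_m, forall j0, (j0 < n1)%N -> Lam v ((k + j0) %% L)%N = 0.
    move=> v j0 hj0; rewrite /Lam big1 // => j _; case: (hp j) => q hq hqS.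
    have -> : (((k + j0) %% L)%N == nth 0%N kept j) = false.
      apply/negP => /eqP he; move: hqS; rewrite (hSin j0 hj0 q) //.
      by rewrite hq -he.
    by rewrite mul0r.
  have hK : forall c i, (i < L)%N ->
      \sum_(r < n1.+1) (tnth a r == c)%:R * Lam l ((i + (n1 - r)) %% L)%N
    + \sum_(r < n1.+1) (tnth a' r == c)%:R * Lam l' ((i + (n1 - r)) %% L)%N = 0.
    move=> c i hi; have := Hu' (delta c (Ordinal hi)).
    by rewrite !dot_test.
  have c1 := core hL haa' (h0 l) (h0 l') hK.
  have c2 : forall q, (q < L)%N -> Lam l' q = 0.
    apply: (@core Sigma L n1 k hL a' a _ _ _ (h0 l') (h0 l)); first by rewrite eq_sym.
    by move=> c i hi; rewrite addrC; apply: hK.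
  have fin : forall v : 'rV_m, (forall q, (q < L)%N -> Lam v q = 0) -> v = 0.
    move=> v hv; apply/rowP => j; rewrite mxE.
    case: (hp j) => q hq _.
    have := hv (val q) (ltn_ord q).
    rewrite /Lam (bigD1 j) //= hq eqxx mul1r big1 ?addr0 // => j' hj'.
    rewrite nth_uniq ?sizeK //.
    have -> : (nat_of_ord j == j') = false.
      by apply/eqP => /val_inj hjj; rewrite hjj eqxx in hj'.
    by rewrite mul0r.
  by rewrite -[u]hsubmxK -/l -/l' (fin _ c1) (fin _ c2) row_mx0.
have Hc := fiber_card fD fsurj z.
rewrite card_mx card_Fp // mul1n in Hc.
rewrite /uprob.
have -> : [set x | (delete_bits n1.+1 S (cyclic_hash x a) == y) &&
                   (delete_bits n1.+1 S (cyclic_hash x a') == y')] = [set x | f x == z].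
  by apply/setP => x; rewrite !inE hev.
have T0 : (0 < #|{ffun Sigma -> cyc L}|)%N by apply/card_gt0P; exists 0.
rewrite -Hc natrM natrX invfM mulrA divff ?mul1r; last first.
  by rewrite pnatr_eq0 -lt0n; move: T0; rewrite -Hc muln_gt0 => /andP [].
by rewrite addnn mul2n.
Qed.
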